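(* Let $x_1=(a_1,b_1),\dots,x_k=(a_k,b_k)\in\mathbb{F}_2^n\times\mathbb{F}_2^n$ be such that $[x_i,x_j]=1$ for all $i\ne j$. Then for every function $f:\mathbb{F}_2^n\to\mathbb{C}$, $$\sum_{i=1}^k\big|\widehat{\Delta_{a_i}f}(b_i)\big|^2\le\|f\|_2^4.$$
   Context: $[(a,b),(c,d)]=a\cdot d+b\cdot c\in\mathbb{F}_2$ is the standard symplectic form. $\Delta_af(x)=f(x+a)\overline{f(x)}$, $\hat g(b)=\mathbb{E}_{x\in\mathbb{F}_2^n}g(x)(-1)^{b\cdot x}$, $\|f\|_2=(\mathbb{E}_x|f(x)|^2)^{1/2}$. *)

(* Defs.v *)
From HB Require Import structures.
From mathcomp Require Import all_boot all_order all_algebra.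
From mathcomp Require Import reals.
From mathcomp Require Import complex.
Set Implicit Arguments. Unset Strict Implicit. Unset Printing Implicit Defensive.
Import Order.TTheory GRing.Theory Num.Theory Num.Def.
Local Open Scope ring_scope.

Definition dotF2 (n : nat) (a b : 'rV['F_2]_n) : 'F_2 := \sum_(i < n) a 0 i * b 0 i.

Definition symp (n : nat) (x y : 'rV['F_2]_n * 'rV['F_2]_n) : 'F_2 :=
  dotF2 x.1 y.2 + dotF2 x.2 y.1.

Definition sgnF2 (C : pzRingType) (e : 'F_2) : C := if e == 0 then 1 else -1.

Definition Ex (C : fieldType) (n : nat) (g : 'rV['F_2]_n -> C) : C :=
  (#|{: 'rV['F_2]_n}|%:R)^-1 * \sum_(x : 'rV['F_2]_n) g x.

Definition Delta (R : realType) (n : nat) (a : 'rV['F_2]_n) (f : 'rV['F_2]_n -> R[i])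
  : 'rV['F_2]_n -> R[i] := fun x => f (x + a) * (f x)^*.

Definition fourier (R : realType) (n : nat) (g : 'rV['F_2]_n -> R[i]) (b : 'rV['F_2]_n) : R[i] :=
  Ex (fun x => g x * sgnF2 _ (dotF2 b x)).

Definition norm2 (R : realType) (n : nat) (f : 'rV['F_2]_n -> R[i]) : R[i] :=
  sqrtC (Ex (fun x => `|f x| ^+ 2)).

(* Main.v *)
Require Import Defs.
From HB Require Import structures.
From mathcomp Require Import all_boot all_order all_algebra.
From mathcomp Require Import reals complex ring.
Import Order.TTheory GRing.Theory Num.Theory.
Local Open Scope ring_scope.
Set Implicit Arguments. Unset Strict Implicit.

Lemma F2cases (e : 'F_2) : e = 0 \/ e = 1.
Proof. case: e => [[|[|m]]] /= H. by left; exact: val_inj. by right; exact: val_inj. by []. Qed.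

Lemma F2xx (e : 'F_2) : e + e = 0.
Proof. by case: (F2cases e) => ->; [rewrite addr0 | apply/val_inj]. Qed.

Lemma sgnD (C : pzRingType) (e1 e2 : 'F_2) :
  sgnF2 C (e1 + e2) = sgnF2 C e1 * sgnF2 C e2.
Proof.
case: (F2cases e1) => ->; case: (F2cases e2) => ->;
rewrite ?F2xx ?addr0 ?add0r /sgnF2 ?eqxx ?oner_eq0 /= ?mul1r ?mulr1 ?mulrNN ?mulr1 //.
Qed.

Lemma sgn2 (C : pzRingType) (e : 'F_2) : sgnF2 C e * sgnF2 C e = 1.
Proof. by rewrite -sgnD F2xx /sgnF2 eqxx. Qed.

Lemma sgn1D (C : pzRingType) (e f : 'F_2) : e + f = 1 -> sgnF2 C e = - sgnF2 C f.
Proof.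
case: (F2cases e) => ->; case: (F2cases f) => ->;
rewrite ?F2xx ?addr0 ?add0r /sgnF2 ?eqxx ?oner_eq0 /= ?opprK //.
all: try (move=> H; have : (1 : 'F_2) == 0 by rewrite H).
all: try by rewrite oner_eq0.
Qed.

Lemma dotC n (a b : 'rV['F_2]_n) : dotF2 a b = dotF2 b a.
Proof. by apply: eq_bigr => i _; rewrite mulrC. Qed.

Lemma dotDr n (b y a : 'rV['F_2]_n) : dotF2 b (y + a) = dotF2 b y + dotF2 b a.
Proof. by rewrite /dotF2 -big_split; apply: eq_bigr => i _; rewrite mxE mulrDr. Qed.

Lemma addKF n (y a : 'rV['F_2]_n) : y + a + a = y.
Proof.
have aa : a + a = 0 by apply/rowP => j; rewrite !mxE F2xx.
by rewrite -addrA aa addr0.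
Qed.

Definition ip (R : realType) n (u v : 'rV['F_2]_n -> R[i]) : R[i] :=
  \sum_y u y * (v y)^*.
Definition W (R : realType) n (a b : 'rV['F_2]_n) (u : 'rV['F_2]_n -> R[i]) :
  'rV['F_2]_n -> R[i] := fun y => sgnF2 R[i] (dotF2 b y) * u (y + a).
Definition eps (R : realType) n (a b : 'rV['F_2]_n) : R[i] :=
  if dotF2 a b == 0 then 1 else 'i.
Definition H (R : realType) n (a b : 'rV['F_2]_n) (u : 'rV['F_2]_n -> R[i]) :
  'rV['F_2]_n -> R[i] := fun y => eps R a b * W a b u y.

Lemma ip_conj (R : realType) n (u v : 'rV['F_2]_n -> R[i]) : (ip u v)^* = ip v u.
Proof. by rewrite /ip rmorph_sum; apply: eq_bigr => y _; rewrite rmorphM /= conjCK mulrC; reflexivity. Qed.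

Lemma ipZl (R : realType) n (c : R[i]) (u v : 'rV['F_2]_n -> R[i]) :
  ip (fun y => c * u y) v = c * ip u v.
Proof. by rewrite /ip mulr_sumr; apply: eq_bigr => y _; rewrite mulrA. Qed.

Lemma ipZr (R : realType) n (c : R[i]) (u v : 'rV['F_2]_n -> R[i]) :
  ip u (fun y => c * v y) = c^* * ip u v.
Proof. by rewrite /ip mulr_sumr; apply: eq_bigr => y _; rewrite rmorphM /= mulrCA. Qed.

Lemma ipBl (R : realType) n (u w v : 'rV['F_2]_n -> R[i]) :
  ip (fun y => u y - w y) v = ip u v - ip w v.
Proof. by rewrite /ip -sumrB; apply: eq_bigr => y _; rewrite mulrBl. Qed.

Lemma ipBr (R : realType) n (u w v : 'rV['F_2]_n -> R[i]) :
  ip v (fun y => u y - w y) = ip v u - ip v w.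
Proof. by rewrite /ip -sumrB; apply: eq_bigr => y _; rewrite rmorphB /= mulrBr. Qed.

Lemma ipNl (R : realType) n (u v : 'rV['F_2]_n -> R[i]) :
  ip (fun y => - u y) v = - ip u v.
Proof. by rewrite /ip -sumrN; apply: eq_bigr => y _; rewrite mulNr. Qed.

Lemma ip_ge0 (R : realType) n (u : 'rV['F_2]_n -> R[i]) : 0 <= ip u u.
Proof. by apply: sumr_ge0 => y _; rewrite -normCK exprn_ge0. Qed.

Lemma sgn_conj (R : realType) (e : 'F_2) : (sgnF2 R[i] e)^* = sgnF2 R[i] e.
Proof. by rewrite /sgnF2; case: ifP => _; rewrite ?rmorphN rmorph1. Qed.

Lemma W_adj (R : realType) n (a b : 'rV['F_2]_n) (u v : 'rV['F_2]_n -> R[i]) :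
  ip (W a b u) v = sgnF2 R[i] (dotF2 a b) * ip u (W a b v).
Proof.
rewrite /ip (reindex_inj (addIr a)) /= mulr_sumr; apply: eq_bigr => y _.
rewrite /W addKF dotDr sgnD rmorphM /= sgn_conj (dotC a b); ring.
Qed.

Lemma H_herm (R : realType) n (a b : 'rV['F_2]_n) (u v : 'rV['F_2]_n -> R[i]) :
  ip (H a b u) v = ip u (H a b v).
Proof.
rewrite /H ipZl ipZr W_adj mulrA; congr (_ * _).
rewrite /eps /sgnF2; case: (F2cases (dotF2 a b)) => ->; rewrite ?eqxx ?oner_eq0 /=.
  by rewrite rmorph1 mulr1.
by rewrite conjCi mulrN1.
Qed.

Lemma HH (R : realType) n (a b : 'rV['F_2]_n) (u : 'rV['F_2]_n -> R[i]) y :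
  H a b (H a b u) y = u y.
Proof.
rewrite /H /W addKF dotDr sgnD.
have E1 : @eps R _ a b * @eps R _ a b * sgnF2 R[i] (dotF2 b a) = 1.
  rewrite (dotC b a) /eps /sgnF2; case: (F2cases (dotF2 a b)) => ->;
    rewrite ?eqxx ?oner_eq0 /= ?mulr1 //.
  by rewrite -expr2 sqrCi mulrNN mulr1.
have E2 := sgn2 R[i] (dotF2 b y).
transitivity ((@eps R _ a b * @eps R _ a b * sgnF2 R[i] (dotF2 b a)) *
   (sgnF2 R[i] (dotF2 b y) * sgnF2 R[i] (dotF2 b y)) * u y); first ring.
by rewrite E1 E2 !mul1r.
Qed.

Lemma H_anti (R : realType) n (ai bi aj bj : 'rV['F_2]_n) (u : 'rV['F_2]_n -> R[i]) y :
  dotF2 ai bj + dotF2 bi aj = 1 ->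
  H aj bj (H ai bi u) y = - H ai bi (H aj bj u) y.
Proof.
move=> hs; rewrite /H /W !dotDr !sgnD (addrAC y aj ai) (dotC bj ai) (sgn1D R[i] hs); ring.
Qed.

Lemma pair_cancel (C : numFieldType) k (d : 'I_k -> 'I_k -> C) :
  (forall i j, i != j -> d i j = - d j i) ->
  \sum_i \sum_j d i j = \sum_i d i i.
Proof.
move=> hd.
set S := \sum_i \sum_j d i j.
have E : S + S = \sum_i \sum_j (d i j + d j i).
  rewrite {2}/S exchange_big -big_split /=; apply: eq_bigr => i _.
  by rewrite big_split.
have E2 : forall i, \sum_j (d i j + d j i) = d i i + d i i.
  move=> i; rewrite (bigD1 i) //= big1 ?addr0 // => j ji.
  by rewrite (hd i j) ?addNr // eq_sym.
rewrite (eq_bigr _ (fun i _ => E2 i)) big_split /= in E; move: E.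
move=> E.
have h2 : (2%:R : C) != 0 by rewrite pnatr_eq0.
apply: (mulIf h2); rewrite !mulr_natr !mulr2n; exact: E.
Qed.

Lemma ip_sum_l (R : realType) n k (c : 'I_k -> R[i]) (u : 'I_k -> 'rV['F_2]_n -> R[i]) v :
  ip (fun y => \sum_i c i * u i y) v = \sum_i c i * ip (u i) v.
Proof.
rewrite /ip; under eq_bigr do rewrite mulr_suml.
rewrite exchange_big; apply: eq_bigr => i _; rewrite mulr_sumr.
by apply: eq_bigr => y _; rewrite mulrA.
Qed.

Lemma ip_sum_r (R : realType) n k (c : 'I_k -> R[i]) (u : 'I_k -> 'rV['F_2]_n -> R[i]) v :
  ip v (fun y => \sum_i c i * u i y) = \sum_i (c i)^* * ip v (u i).
Proof.
rewrite -ip_conj ip_sum_l rmorph_sum; apply: eq_bigr => i _.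
by rewrite rmorphM /= ip_conj.
Qed.

Lemma core (R : realType) n k (x : 'I_k -> 'rV['F_2]_n * 'rV['F_2]_n)
  (hx : forall i j : 'I_k, i != j -> symp (x i) (x j) = 1)
  (f : 'rV['F_2]_n -> R[i]) :
  \sum_i ip (H (x i).1 (x i).2 f) f * ip (H (x i).1 (x i).2 f) f <= ip f f ^+ 2.
Proof.
set r := fun i => ip (H (x i).1 (x i).2 f) f.
have -> : \sum_i ip (H (x i).1 (x i).2 f) f * ip (H (x i).1 (x i).2 f) f
  = \sum_i r i * r i by [].
set T := \sum_i r i * r i.
set P := ip f f.
have rreal : forall i, (r i)^* = r i by move=> i; rewrite /r ip_conj H_herm.
have Preal : P^* = P by rewrite /P ip_conj.
have Treal : T^* = T.
  by rewrite /T rmorph_sum; apply: eq_bigr => i _; rewrite rmorphM /= rreal.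
set g := fun y => \sum_i r i * H (x i).1 (x i).2 f y.
have ipgf : ip g f = T by rewrite /g ip_sum_l.
have ipfg : ip f g = T by rewrite -ip_conj ipgf Treal.
have ipgg : ip g g = T * P.
  rewrite /g ip_sum_l.
  under eq_bigr do rewrite ip_sum_r mulr_sumr.
  rewrite pair_cancel.
    rewrite /T mulr_suml; apply: eq_bigr => i _.
    rewrite rreal -H_herm.
    rewrite (_ : ip _ _ = P) ?mulrA //.
    by apply: eq_bigr => y _; rewrite HH.
  move=> i j ij; rewrite !rreal.
  have -> : ip (H (x i).1 (x i).2 f) (H (x j).1 (x j).2 f)
      = - ip (H (x j).1 (x j).2 f) (H (x i).1 (x i).2 f).
    rewrite -H_herm -[in RHS]H_herm -ipNl.
    by apply: eq_bigr => y _; rewrite (H_anti _ _ (hx i j ij)).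
  ring.
have hh := ip_ge0 (fun y => P * f y - g y).
rewrite ipBl !ipBr !ipZl !ipZr ipfg ipgf ipgg Preal in hh.
have E : P * (P * P) - P * T - (P * T - T * P) = P * (P ^+ 2 - T) by ring.
rewrite E in hh.
have [P0|Pn0] := eqVneq P 0.
  have f0 : forall y, f y = 0.
    move=> y; have /psumr_eq0P h : \sum_y `|f y| ^+ 2 = 0.
      transitivity P; last exact: P0.
      by rewrite /P /ip; apply: eq_bigr => z _; rewrite normCK.
    have := h (fun z _ => exprn_ge0 2 (normr_ge0 (f z))) y isT.
    by move=> /eqP; rewrite sqrf_eq0 normr_eq0 => /eqP.
  have r0 : forall i, r i = 0.
    by move=> i; rewrite /r /ip big1 // => y _; rewrite f0 rmorph0 mulr0.
  by rewrite P0 /T big1 ?expr0n ?lexx // => i _; rewrite r0 mulr0.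
have Ppos : 0 < P by rewrite lt_def Pn0 ip_ge0.
by rewrite pmulr_rge0 // subr_ge0 in hh.
Qed.

Theorem lemma2p15 (R : realType) (n k : nat)
  (x : 'I_k -> 'rV['F_2]_n * 'rV['F_2]_n)
  (hx : forall i j : 'I_k, i != j -> symp (x i) (x j) = 1)
  (f : 'rV['F_2]_n -> R[i]) :
  \sum_(i < k) `|fourier (Delta (x i).1 f) (x i).2| ^+ 2 <= (norm2 f) ^+ 4.
Proof.
set N := ((#|{: 'rV['F_2]_n}|%:R : R[i])^-1).
have N0 : 0 <= N by rewrite /N invr_ge0 ler0n.
have hF : forall a b : 'rV['F_2]_n,
    `|fourier (Delta a f) b| ^+ 2 = N ^+ 2 * (ip (H a b f) f * ip (H a b f) f).
  move=> a b.
  have -> : fourier (Delta a f) b = N * ip (W a b f) f.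
    rewrite /fourier /Ex /Delta /ip /W -/N; congr (_ * _).
    by apply: eq_bigr => y _; ring.
  have -> : ip (H a b f) f * ip (H a b f) f = `|ip (W a b f) f| ^+ 2.
    have rr : (ip (H a b f) f)^* = ip (H a b f) f by rewrite ip_conj H_herm.
    rewrite -{2}rr -normCK /H ipZl normrM.
    have -> : `|@eps R _ a b| = 1.
      by rewrite /eps; case: ifP => _; rewrite ?normr1 ?normCi.
    by rewrite mul1r.
  by rewrite normrM exprMn (ger0_norm N0).
rewrite (eq_bigr _ (fun i _ => hF (x i).1 (x i).2)) -mulr_sumr.
have -> : norm2 f ^+ 4 = N ^+ 2 * ip f f ^+ 2.
  rewrite /norm2 (_ : 4 = 2 * 2)%N // exprM sqrtCK -exprMn; congr (_ ^+ 2).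
  rewrite /Ex -/N; congr (_ * _); apply: eq_bigr => y _; by rewrite normCK.
apply: ler_wpM2l; first exact: exprn_ge0.
exact: core.
Qed.
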